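(* Let $A,B,C$ be non-degenerate square $\{0,1\}$-matrices and let $\varphi_1:X_A\to X_B$, $\varphi_2:X_B\to X_C$, $\varphi_3:X_A\to X_C$ be elementary conjugacies. Set $R_i=R_{\varphi_i}$, $S_i=S_{\varphi_i}$ for $i=1,2,3$. Then $\varphi_2\circ\varphi_1=\varphi_3$ if and only if $R_1R_2=R_3$, $R_2S_3=S_1$ and $S_3R_1=S_2$.
   Context: Non-degenerate: no zero rows or columns; products are integer matrix products. $X_A=\{x\in\{1,\dots,m\}^{\mathbb Z}:A_{x_\ell,x_{\ell+1}}=1\ \forall\ell\}$ with the left shift; a conjugacy is a shift-commuting homeomorphism. A conjugacy $\varphi:X_A\to X_B$ is elementary if there are $\varphi_{\mathrm{loc}}$ (on pairs $(a,a')$ with $A_{a,a'}=1$) and $\varphi^{-1}_{\mathrm{loc}}$ (on pairs $(b,b')$ with $B_{b,b'}=1$) with $\varphi(x)_i=\varphi_{\mathrm{loc}}(x_i,x_{i+1})$ and $\varphi^{-1}(y)_i=\varphi^{-1}_{\mathrm{loc}}(y_{i-1},y_i)$. For such $\varphi$, $R_\varphi$ is the $\{0,1\}$-matrix with $(R_\varphi)_{a,b}=1$ iff $\varphi_{\mathrm{loc}}(a,a')=b$ for some allowed $a'$, and $S_\varphi$ is the $\{0,1\}$-matrix with $(S_\varphi)_{b,a}=1$ iff $\varphi^{-1}_{\mathrm{loc}}(b,b')=a$ for some allowed $b'$. *)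

(* Defs.v *)
From mathcomp Require Import all_boot all_order all_algebra.
Set Implicit Arguments. Unset Strict Implicit. Unset Printing Implicit Defensive.
Import Order.TTheory GRing.Theory Num.Theory.
Local Open Scope ring_scope.

Definition pt (m : nat) := int -> 'I_m.

Definition zero_one (m : nat) (A : 'M[int]_m) : Prop :=
  forall i j, A i j = 0 \/ A i j = 1.
Definition nondeg_mx (m : nat) (A : 'M[int]_m) : Prop :=
  (forall i, exists j, A i j != 0) /\ (forall j, exists i, A i j != 0).

Definition inX (m : nat) (A : 'M[int]_m) (x : pt m) : Prop :=
  forall l : int, A (x l) (x (l + 1)) = 1.

Definition shift (m : nat) (x : pt m) : pt m := fun i => x (i + 1).

(* Continuity of phi on X_A for the (subspace of the) product topology of
   discrete alphabets: cylinder neighbourhoods. *)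
Definition continuous_on (m n : nat) (A : 'M[int]_m) (phi : pt m -> pt n) : Prop :=
  forall x, inX A x -> forall N : nat, exists M : nat,
    forall y, inX A y -> (forall i : int, `|i| <= M%:Z -> y i = x i) ->
      forall i : int, `|i| <= N%:Z -> phi y i = phi x i.

Definition conjugacy (m n : nat) (A : 'M[int]_m) (B : 'M[int]_n)
    (phi : pt m -> pt n) : Prop :=
  [/\ forall x, inX A x -> inX B (phi x),
      forall x, inX A x -> forall i, phi (shift x) i = shift (phi x) i,
      continuous_on A phi &
      exists psi : pt n -> pt m,
        [/\ forall y, inX B y -> inX A (psi y),
            forall x, inX A x -> forall i, psi (phi x) i = x i,
            forall y, inX B y -> forall i, phi (psi y) i = y i &
            continuous_on B psi]].

Definition elementary (m n : nat) (A : 'M[int]_m) (B : 'M[int]_n)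
    (phi : pt m -> pt n) (loc : 'I_m -> 'I_m -> 'I_n)
    (iloc : 'I_n -> 'I_n -> 'I_m) : Prop :=
  [/\ conjugacy A B phi,
      forall x, inX A x -> forall i, phi x i = loc (x i) (x (i + 1)) &
      forall x, inX A x -> forall i, x i = iloc (phi x (i - 1)) (phi x i)].

Definition Rmat (m n : nat) (A : 'M[int]_m) (loc : 'I_m -> 'I_m -> 'I_n)
  : 'M[int]_(m, n) :=
  \matrix_(a, b) (if [exists a', (A a a' == 1) && (loc a a' == b)] then 1 else 0).
Definition Smat (m n : nat) (B : 'M[int]_n) (iloc : 'I_n -> 'I_n -> 'I_m)
  : 'M[int]_(n, m) :=
  \matrix_(b, a) (if [exists b', (B b b' == 1) && (iloc b b' == a)] then 1 else 0).

(* Main.v *)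
Require Import Defs.
From mathcomp Require Import all_boot all_order all_algebra.
Import GRing.Theory.
Local Open Scope ring_scope.

Set Implicit Arguments. Unset Strict Implicit.

Lemma NegzS1 k : Negz k.+1 + 1 = Negz k.
Proof. by rewrite !NegzE -addn1 PoszD opprD subrK. Qed.
Lemma PoszS1 k : Posz k + 1 = Posz k.+1.
Proof. by rewrite -PoszD addn1. Qed.

Section Pt.
Variables (m : nat) (A : 'M[int]_m).
Hypotheses (h01 : zero_one A) (hnd : nondeg_mx A).

Lemma succ_ex a : exists a', A a a' = 1.
Proof.
have [j hj] := hnd.1 a; exists j.
by case: (h01 a j) hj => // ->; rewrite eqxx.
Qed.

Lemma pred_ex a : exists a0, A a0 a = 1.
Proof.
have [j hj] := hnd.2 a; exists j.
by case: (h01 j a) hj => // ->; rewrite eqxx.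
Qed.

Lemma mkpt_spec a b c : A a b = 1 -> A b c = 1 ->
  exists x, [/\ inX A x, x 0 = a, x 1 = b & x 2 = c].
Proof.
move=> hab hbc.
have sb z : exists a', A z a' == 1 by have [w hw] := succ_ex z; exists w; rewrite hw.
have pb z : exists a', A a' z == 1 by have [w hw] := pred_ex z; exists w; rewrite hw.
pose sc z := xchoose (sb z). pose pr z := xchoose (pb z).
have hsc z : A z (sc z) = 1 by apply/eqP; exact: (xchooseP (sb z)).
have hpr z : A (pr z) z = 1 by apply/eqP; exact: (xchooseP (pb z)).
pose x : pt m := fun l => match l with
  | Posz 0 => a | Posz 1 => b | Posz k.+2 => iter k sc c
  | Negz k => iter k.+1 pr a end.
exists x; split => //.
case=> [[|[|k]]|k].
- by rewrite PoszS1.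
- by rewrite PoszS1.
- rewrite PoszS1 /=; exact: hsc.
- case: k => [|k].
    by rewrite (_ : Negz 0 + 1 = 0) //= ; exact: hpr.
  rewrite NegzS1 /=; exact: hpr.
Qed.
End Pt.

Definition Rp m n (A : 'M[int]_m) (loc : 'I_m -> 'I_m -> 'I_n) a b :=
  [exists a', (A a a' == 1) && (loc a a' == b)].
Definition Sp m n (B : 'M[int]_n) (iloc : 'I_n -> 'I_n -> 'I_m) b a :=
  [exists b', (B b b' == 1) && (iloc b b' == a)].

Lemma RpP m n (A : 'M[int]_m) (loc : 'I_m -> 'I_m -> 'I_n) a b :
  reflect (exists a', A a a' = 1 /\ loc a a' = b) (Rp A loc a b).
Proof.
apply: (iffP existsP) => [[a' /andP[/eqP h1 /eqP h2]]|[a' [h1 h2]]].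
  by exists a'.
by exists a'; rewrite h1 h2 !eqxx.
Qed.

Lemma SpP m n (B : 'M[int]_n) (iloc : 'I_n -> 'I_n -> 'I_m) b a :
  reflect (exists b', B b b' = 1 /\ iloc b b' = a) (Sp B iloc b a).
Proof.
apply: (iffP existsP) => [[a' /andP[/eqP h1 /eqP h2]]|[a' [h1 h2]]].
  by exists a'.
by exists a'; rewrite h1 h2 !eqxx.
Qed.

Lemma RmatE m n (A : 'M[int]_m) (loc : 'I_m -> 'I_m -> 'I_n) a b :
  Rmat A loc a b = if Rp A loc a b then 1 else 0.
Proof. by rewrite /Rmat mxE. Qed.
Lemma SmatE m n (B : 'M[int]_n) (iloc : 'I_n -> 'I_n -> 'I_m) b a :
  Smat B iloc b a = if Sp B iloc b a then 1 else 0.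
Proof. by rewrite /Smat mxE. Qed.

Lemma mulE k l r (M : 'M[int]_(k,l)) (N : 'M[int]_(l,r))
  (P : 'I_k -> 'I_l -> bool) (Q : 'I_l -> 'I_r -> bool) :
  (forall a b, M a b = if P a b then 1 else 0) ->
  (forall a b, N a b = if Q a b then 1 else 0) ->
  forall i j, (M *m N) i j = \sum_t (if P i t && Q t j then 1 else 0).
Proof.
move=> hM hN i j; rewrite mxE; apply: eq_bigr => t _; rewrite hM hN.
by case: (P i t); case: (Q t j); rewrite ?mul1r ?mul0r.
Qed.

Lemma sum01_eq l (P : pred 'I_l) :
  (forall t t', P t -> P t' -> t = t') ->
  \sum_t (if P t then 1 else 0 : int) = if [exists t, P t] then 1 else 0.
Proof.
move=> hu; case: existsP => [[t Pt]|nP].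
  rewrite (bigD1 t) //= Pt big1 ?addr0 // => t' ht'.
  case: ifP => // Pt'; by rewrite (hu _ _ Pt Pt') eqxx in ht'.
by rewrite big1 // => t _; case: ifP => // Pt; case: nP; exists t.
Qed.

Lemma sum01_pos l (P : pred 'I_l) t : P t ->
  \sum_s (if P s then 1 else 0 : int) = 0 -> False.
Proof.
move=> Pt h.
have H := @Num.Theory.psumr_eq0P _ _ predT (fun s => if P s then 1 else 0 : int).
have hnn : forall s, predT s -> (0:int) <= (if P s then 1 else 0) by move=> s _; case: ifP.
have := H hnn h t isT; rewrite /= Pt => /eqP; by rewrite oner_eq0.
Qed.

Lemma sum01_ex l (P : pred 'I_l) :
  \sum_s (if P s then 1 else 0 : int) != 0 -> exists s, P s.
Proof.
move=> h; case: (pickP P) => [s Ps|nP]; first by exists s.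
by move: h; rewrite big1 ?eqxx // => s _; rewrite nP.
Qed.

Section One.
Variables (m n : nat) (A : 'M[int]_m) (B : 'M[int]_n)
  (loc : 'I_m -> 'I_m -> 'I_n) (iloc : 'I_n -> 'I_n -> 'I_m).
Hypothesis L1 : forall a a' a'', A a a' = 1 -> A a' a'' = 1 ->
  B (loc a a') (loc a' a'') = 1 /\ iloc (loc a a') (loc a' a'') = a'.
Hypothesis L2 : forall b b' b'', B b b' = 1 -> B b' b'' = 1 ->
  A (iloc b b') (iloc b' b'') = 1 /\ loc (iloc b b') (iloc b' b'') = b'.
Hypothesis predA : forall a, exists a0, A a0 a = 1.
Hypothesis predB : forall b, exists b0, B b0 b = 1.

Lemma U1 a b a'' : Rp A loc a b -> Sp B iloc b a'' -> loc a a'' = b.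
Proof using L1 L2 predA predB.
case/RpP=> a1 [h1 e1]; case/SpP=> b1 [h2 e2].
have [a0 h0] := predA a.
have [hb0 eb0] := L1 h0 h1. rewrite e1 in hb0 eb0.
have [_ ] := L2 hb0 h2. by rewrite eb0 e2.
Qed.

Lemma U2 a b b'' : Sp B iloc b a -> Rp A loc a b'' -> iloc b b'' = a.
Proof using L1 L2 predA predB.
case/SpP=> b1 [h1 e1]; case/RpP=> a1 [h2 e2].
have [b0 h0] := predB b.
have [ha0 ea0] := L2 h0 h1. rewrite e1 in ha0 ea0.
have [_ ] := L1 ha0 h2. by rewrite ea0 e2.
Qed.
End One.

Section Three.
Variables (m n p : nat) (A : 'M[int]_m) (B : 'M[int]_n) (C : 'M[int]_p)
  (loc1 : 'I_m -> 'I_m -> 'I_n) (iloc1 : 'I_n -> 'I_n -> 'I_m)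
  (loc2 : 'I_n -> 'I_n -> 'I_p) (iloc2 : 'I_p -> 'I_p -> 'I_n)
  (loc3 : 'I_m -> 'I_m -> 'I_p) (iloc3 : 'I_p -> 'I_p -> 'I_m).
Hypothesis L11 : forall a a' a'', A a a' = 1 -> A a' a'' = 1 ->
  B (loc1 a a') (loc1 a' a'') = 1 /\ iloc1 (loc1 a a') (loc1 a' a'') = a'.
Hypothesis L12 : forall b b' b'', B b b' = 1 -> B b' b'' = 1 ->
  A (iloc1 b b') (iloc1 b' b'') = 1 /\ loc1 (iloc1 b b') (iloc1 b' b'') = b'.
Hypothesis L21 : forall a a' a'', B a a' = 1 -> B a' a'' = 1 ->
  C (loc2 a a') (loc2 a' a'') = 1 /\ iloc2 (loc2 a a') (loc2 a' a'') = a'.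
Hypothesis L22 : forall b b' b'', C b b' = 1 -> C b' b'' = 1 ->
  B (iloc2 b b') (iloc2 b' b'') = 1 /\ loc2 (iloc2 b b') (iloc2 b' b'') = b'.
Hypothesis L31 : forall a a' a'', A a a' = 1 -> A a' a'' = 1 ->
  C (loc3 a a') (loc3 a' a'') = 1 /\ iloc3 (loc3 a a') (loc3 a' a'') = a'.
Hypothesis L32 : forall b b' b'', C b b' = 1 -> C b' b'' = 1 ->
  A (iloc3 b b') (iloc3 b' b'') = 1 /\ loc3 (iloc3 b b') (iloc3 b' b'') = b'.
Hypothesis predA : forall a, exists a0, A a0 a = 1.
Hypothesis predB : forall b, exists b0, B b0 b = 1.
Hypothesis predC : forall b, exists b0, C b0 b = 1.
Hypothesis succA : forall a, exists a0, A a a0 = 1.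
Hypothesis succB : forall b, exists b0, B b b0 = 1.
Hypothesis succC : forall b, exists b0, C b b0 = 1.

Section Fwd.
Hypothesis H3 : forall a a' a'', A a a' = 1 -> A a' a'' = 1 ->
  loc2 (loc1 a a') (loc1 a' a'') = loc3 a a'.

Lemma I1_ex a c : Rp A loc3 a c -> exists b, Rp A loc1 a b && Rp B loc2 b c.
Proof.
case/RpP=> a1 [h1 e1]. have [a2 h2] := succA a1.
exists (loc1 a a1). apply/andP; split; apply/RpP.
  by exists a1.
have [hb _] := L11 h1 h2. exists (loc1 a1 a2); split => //. by rewrite H3 // e1.
Qed.

Lemma I1_un a b c a0 : A a0 a = 1 -> Rp A loc1 a b -> Rp B loc2 b c ->
  Rp A loc3 a c /\ b = iloc2 (loc3 a0 a) c.
Proof.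
move=> h0 /RpP[a1 [h1 e1]] /RpP[b1 [hb1 e2]].
have [b2 hb2] := succB b1.
have [hb0 eb0] := L11 h0 h1. rewrite e1 in hb0 eb0.
have [ha2 ea2] := L12 hb0 hb1. rewrite eb0 in ha2 ea2.
have [ha3 ea3] := L12 hb1 hb2.
have ec : loc3 a (iloc1 b b1) = c by rewrite -(H3 ha2 ha3) ea2 ea3.
split. by apply/RpP; exists (iloc1 b b1).
have e0 := H3 h0 ha2. rewrite ea2 in e0.
have [_ E] := L21 hb0 hb1. by rewrite e0 e2 in E.
Qed.

Lemma I2_ex b a : Sp B iloc1 b a -> exists c, Rp B loc2 b c && Sp C iloc3 c a.
Proof.
case/SpP=> b1 [hb1 e1]. have [bp hbp] := predB b. have [b2 hb2] := succB b1.
have [ha0 ea0] := L12 hbp hb1. rewrite e1 in ha0 ea0.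
have [ha' ea'] := L12 hb1 hb2. rewrite e1 in ha' ea'.
have ec := H3 ha0 ha'. rewrite ea0 ea' in ec.
exists (loc2 b b1). apply/andP; split; first by apply/RpP; exists b1.
have [hc ec'] := L31 ha0 ha'. apply/SpP; exists (loc3 a (iloc1 b1 b2)).
by rewrite ec; split.
Qed.

Lemma I2_un b c a bp : B bp b = 1 -> Rp B loc2 b c -> Sp C iloc3 c a ->
  Sp B iloc1 b a /\ c = loc3 (iloc1 bp b) a.
Proof.
move=> hbp /RpP[b1 [hb1 e2]] /SpP[c1 [hc1 e3]].
have [hcp ecp] := L21 hbp hb1. rewrite e2 in hcp ecp.
have [cpp hcpp] := predC (loc2 bp b).
have [c2 hc2] := succC c1.
have [ha0 ea0] := L32 hcp hc1. rewrite e3 in ha0 ea0.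
have [ham eam] := L32 hcpp hcp.
have [ha'' ea''] := L32 hc1 hc2. rewrite e3 in ha'' ea''.
have [hy1 _] := L11 ham ha0.
have [hy2 ey2] := L11 ha0 ha''.
have e1 := H3 ham ha0. rewrite eam in e1.
have e4 := H3 ha0 ha''. rewrite ea0 in e4.
have [_ ey0] := L21 hy1 hy2. rewrite e1 e4 ecp in ey0.
rewrite -ey0 in hy2 e4 ey2.
split. by apply/SpP; exists (loc1 a (iloc3 c1 c2)).
have [ha0' ea0'] := L12 hbp hy2. rewrite ey2 in ha0' ea0'.
have X := H3 ha0' ha''. rewrite ea0' e4 in X. exact X.
Qed.

Lemma I3_ex c b : Sp C iloc2 c b -> exists a, Sp C iloc3 c a && Rp A loc1 a b.
Proof.
case/SpP=> c1 [hc1 e1]. have [cp hcp] := predC c. have [c2 hc2] := succC c1.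
have [ha0 ea0] := L32 hcp hc1.
have [ha2 ea2] := L32 hc1 hc2.
have [a3 ha3] := succA (iloc3 c1 c2).
have [hy0 _] := L11 ha0 ha2. have [hy1 _] := L11 ha2 ha3.
have [_ ey] := L21 hy0 hy1. rewrite (H3 ha0 ha2) (H3 ha2 ha3) ea0 ea2 e1 in ey.
exists (iloc3 c c1). apply/andP; split; first by apply/SpP; exists c1.
apply/RpP; exists (iloc3 c1 c2); split; [exact ha2 | by rewrite ey].
Qed.

Lemma I3_un c b a cp : C cp c = 1 -> Sp C iloc3 c a -> Rp A loc1 a b ->
  Sp C iloc2 c b /\ a = iloc1 (iloc2 cp c) b.
Proof.
move=> hcp /SpP[c1 [hc1 e3]] /RpP[a1 [ha1 e1]].
have [ha0 ea0] := L32 hcp hc1. rewrite e3 in ha0 ea0.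
have [a2 ha2] := succA a1.
have [hy0 ey0] := L11 ha0 ha1. rewrite e1 in hy0 ey0.
have [hy2 _] := L11 ha1 ha2. rewrite e1 in hy2.
have [hc' ec'] := L21 hy0 hy2.
have E0 := H3 ha0 ha1. rewrite e1 ea0 in E0.
rewrite E0 in hc' ec'.
split. by apply/SpP; exists (loc2 b (loc1 a1 a2)).
have [cpp hcpp] := predC cp.
have [ham eam] := L32 hcpp hcp.
have [hym _] := L11 ham ha0.
have E1 := H3 ham ha0. rewrite eam in E1.
have [_ E2] := L21 hym hy0. rewrite E1 E0 in E2.
by rewrite E2 ey0.
Qed.
End Fwd.

Section Bwd.
Hypothesis I1 : forall a b c, Rp A loc1 a b -> Rp B loc2 b c -> Rp A loc3 a c.
Hypothesis I2 : forall b c a, Rp B loc2 b c -> Sp C iloc3 c a -> Sp B iloc1 b a.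
Hypothesis I3 : forall c b, Sp C iloc2 c b -> exists a, Sp C iloc3 c a && Rp A loc1 a b.

Lemma back a a' a'' a''' : A a a' = 1 -> A a' a'' = 1 -> A a'' a''' = 1 ->
  loc2 (loc1 a a') (loc1 a' a'') = loc3 a a'.
Proof.
move=> h1 h2 h3.
have [hy ey] := L11 h1 h2. have [hy' _] := L11 h2 h3.
have r1 : Rp A loc1 a (loc1 a a') by apply/RpP; exists a'.
have r2 : Rp B loc2 (loc1 a a') (loc2 (loc1 a a') (loc1 a' a''))
  by apply/RpP; exists (loc1 a' a'').
have r3 := I1 r1 r2.
have [hw ew] := L21 hy hy'.
have s2 : Sp C iloc2 (loc2 (loc1 a a') (loc1 a' a'')) (loc1 a' a'')
  by apply/SpP; eexists; split; [exact hw | exact ew].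
have [ast /andP[s3 r1']] := I3 s2.
have s1 := I2 r2 s3.
have ea := U2 L11 L12 predA predB s1 r1'.
rewrite ey in ea. rewrite -ea in s3.
symmetry; exact: (U1 L31 L32 predA predC r3 s3).
Qed.
End Bwd.
End Three.

Lemma el_L1 m n (A : 'M[int]_m) (B : 'M[int]_n) phi loc iloc :
  zero_one A -> nondeg_mx A -> elementary A B phi loc iloc ->
  forall a a' a'', A a a' = 1 -> A a' a'' = 1 ->
  B (loc a a') (loc a' a'') = 1 /\ iloc (loc a a') (loc a' a'') = a'.
Proof.
move=> h01 hnd [[hXB _ _ _] hloc hiloc] a a' a'' h1 h2.
have [x [hx x0 x1 x2]] := mkpt_spec h01 hnd h1 h2.
have e0 := hloc x hx 0. have e1 := hloc x hx 1.
rewrite (_ : (0:int) + 1 = 1) // x0 x1 in e0.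
rewrite (_ : (1:int) + 1 = 2) // x1 x2 in e1.
split.
  have := hXB x hx 0. by rewrite (_ : (0:int) + 1 = 1) // e0 e1.
have := hiloc x hx 1. by rewrite (_ : (1:int) - 1 = 0) // e0 e1 x1.
Qed.

Lemma el_L2 m n (A : 'M[int]_m) (B : 'M[int]_n) phi loc iloc :
  zero_one B -> nondeg_mx B -> elementary A B phi loc iloc ->
  forall b b' b'', B b b' = 1 -> B b' b'' = 1 ->
  A (iloc b b') (iloc b' b'') = 1 /\ loc (iloc b b') (iloc b' b'') = b'.
Proof.
move=> h01 hnd [[_ _ _ [psi [hpX _ hpp _]]] hloc hiloc] b b' b'' h1 h2.
have [y [hy y0 y1 y2]] := mkpt_spec h01 hnd h1 h2.
have hx : inX A (psi y) := hpX y hy.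
have e1 := hiloc _ hx 1. have e2 := hiloc _ hx 2.
rewrite (_ : (1:int) - 1 = 0) // !hpp // y0 y1 in e1.
rewrite (_ : (2:int) - 1 = 1) // !hpp // y1 y2 in e2.
split.
  have := hx 1. by rewrite (_ : (1:int) + 1 = 2) // -e1 -e2.
have := hloc _ hx 1. rewrite (_ : (1:int) + 1 = 2) // hpp // y1 -e1 -e2.
by move=> <-.
Qed.

Theorem mainTheorem11 (m n p : nat)
  (A : 'M[int]_m) (B : 'M[int]_n) (C : 'M[int]_p)
  (hA01 : zero_one A) (hB01 : zero_one B) (hC01 : zero_one C)
  (hA : nondeg_mx A) (hB : nondeg_mx B) (hC : nondeg_mx C)
  (phi1 : pt m -> pt n) (loc1 : 'I_m -> 'I_m -> 'I_n) (iloc1 : 'I_n -> 'I_n -> 'I_m)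
  (phi2 : pt n -> pt p) (loc2 : 'I_n -> 'I_n -> 'I_p) (iloc2 : 'I_p -> 'I_p -> 'I_n)
  (phi3 : pt m -> pt p) (loc3 : 'I_m -> 'I_m -> 'I_p) (iloc3 : 'I_p -> 'I_p -> 'I_m)
  (h1 : elementary A B phi1 loc1 iloc1)
  (h2 : elementary B C phi2 loc2 iloc2)
  (h3 : elementary A C phi3 loc3 iloc3) :
  (forall x, inX A x -> forall i, phi2 (phi1 x) i = phi3 x i) <->
  [/\ Rmat A loc1 *m Rmat B loc2 = Rmat A loc3,
      Rmat B loc2 *m Smat C iloc3 = Smat B iloc1 &
      Smat C iloc3 *m Rmat A loc1 = Smat C iloc2].
Proof.
have L11 := el_L1 hA01 hA h1. have L12 := el_L2 hB01 hB h1.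
have L21 := el_L1 hB01 hB h2. have L22 := el_L2 hC01 hC h2.
have L31 := el_L1 hA01 hA h3. have L32 := el_L2 hC01 hC h3.
have pA := pred_ex hA01 hA. have pB := pred_ex hB01 hB. have pC := pred_ex hC01 hC.
have sA := succ_ex hA01 hA. have sB := succ_ex hB01 hB. have sC := succ_ex hC01 hC.
case: h1 => [[hXB1 _ _ _] hloc1 _]. case: h2 => [_ hloc2 _]. case: h3 => [_ hloc3 _].
split.
- move=> hcomp.
  have H3 : forall a a' a'', A a a' = 1 -> A a' a'' = 1 ->
      loc2 (loc1 a a') (loc1 a' a'') = loc3 a a'.
    move=> a a' a'' ha ha'.
    have [x [hx x0 x1 x2]] := mkpt_spec hA01 hA ha ha'.
    have := hcomp x hx 0.
    rewrite hloc2; last exact: hXB1.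
    rewrite !(hloc1 x hx) hloc3 //.
    by rewrite (_ : (0:int) + 1 = 1) // (_ : (1:int) + 1 = 2) // x0 x1 x2.
  split; apply/matrixP.
  + move=> a c; rewrite (mulE (RmatE A loc1) (RmatE B loc2)) RmatE.
    have [a0 h0] := pA a.
    rewrite (@sum01_eq _ (fun b => Rp A loc1 a b && Rp B loc2 b c)); last first.
      move=> t t' /andP[r1 r2] /andP[r1' r2'].
      by rewrite (I1_un L11 L12 L21 sB H3 h0 r1 r2).2
                 (I1_un L11 L12 L21 sB H3 h0 r1' r2').2.
    congr (if _ then _ else _); apply/existsP/idP.
      by case=> b /andP[r1 r2]; exact: (I1_un L11 L12 L21 sB H3 h0 r1 r2).1.
    exact: (I1_ex L11 sA H3).
  + move=> b a; rewrite (mulE (RmatE B loc2) (SmatE C iloc3)) SmatE.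
    have [b0 h0] := pB b.
    rewrite (@sum01_eq _ (fun c => Rp B loc2 b c && Sp C iloc3 c a)); last first.
      move=> t t' /andP[r1 r2] /andP[r1' r2'].
      by rewrite (I2_un L11 L12 L21 L32 pC sC H3 h0 r1 r2).2
                 (I2_un L11 L12 L21 L32 pC sC H3 h0 r1' r2').2.
    congr (if _ then _ else _); apply/existsP/idP.
      by case=> c /andP[r1 r2]; exact: (I2_un L11 L12 L21 L32 pC sC H3 h0 r1 r2).1.
    exact: (I2_ex L12 L31 pB sB H3).
  + move=> c b; rewrite (mulE (SmatE C iloc3) (RmatE A loc1)) SmatE.
    have [c0 h0] := pC c.
    rewrite (@sum01_eq _ (fun a => Sp C iloc3 c a && Rp A loc1 a b)); last first.
      move=> t t' /andP[r1 r2] /andP[r1' r2'].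
      by rewrite (I3_un L11 L21 L32 pC sA H3 h0 r1 r2).2
                 (I3_un L11 L21 L32 pC sA H3 h0 r1' r2').2.
    congr (if _ then _ else _); apply/existsP/idP.
      by case=> a /andP[r1 r2]; exact: (I3_un L11 L21 L32 pC sA H3 h0 r1 r2).1.
    exact: (I3_ex L11 L21 L32 pC sA sC H3).
- case=> E1 E2 E3.
  have I1 : forall a b c, Rp A loc1 a b -> Rp B loc2 b c -> Rp A loc3 a c.
    move=> a b c r1 r2.
    have := congr1 (fun M : 'M[int]_(m,p) => M a c) E1.
    rewrite /= (mulE (RmatE A loc1) (RmatE B loc2)) RmatE.
    case: ifP => // _ hs; exfalso.
    apply: (@sum01_pos _ (fun t => Rp A loc1 a t && Rp B loc2 t c) b _ hs).
    by rewrite /= r1 r2.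
  have I2 : forall b c a, Rp B loc2 b c -> Sp C iloc3 c a -> Sp B iloc1 b a.
    move=> b c a r1 r2.
    have := congr1 (fun M : 'M[int]_(n,m) => M b a) E2.
    rewrite /= (mulE (RmatE B loc2) (SmatE C iloc3)) SmatE.
    case: ifP => // _ hs; exfalso.
    apply: (@sum01_pos _ (fun t => Rp B loc2 b t && Sp C iloc3 t a) c _ hs).
    by rewrite /= r1 r2.
  have I3 : forall c b, Sp C iloc2 c b -> exists a, Sp C iloc3 c a && Rp A loc1 a b.
    move=> c b s2.
    have := congr1 (fun M : 'M[int]_(p,n) => M c b) E3.
    rewrite /= (mulE (SmatE C iloc3) (RmatE A loc1)) SmatE s2 => hs.
    apply: (@sum01_ex _ (fun t => Sp C iloc3 c t && Rp A loc1 t b)).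
    by rewrite hs oner_eq0.
  move=> x hx i.
  rewrite hloc2; last exact: hXB1.
  rewrite !(hloc1 x hx) hloc3 //.
  exact: (back L11 L12 L21 L31 L32 pA pB pC I1 I2 I3 (hx i) (hx (i + 1)) (hx (i + 1 + 1))).
Qed.
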